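(* Let $V$ be a complex normed vector space and $L\in l^{\infty}(V)^*$. The following are equivalent: (i) $L$ is a Banach limit functional; (ii) $|L(x)|\le p(x)$ for all $x\in l^{\infty}(V)$.
   Context: $\mathbb{N}=\{1,2,3,\dots\}$. $l^{\infty}(V)$ is the space of bounded sequences $x=\{x_n\}_{n=1}^\infty$ in $V$ with norm $\|x\|_\infty=\sup_n\|x_n\|_V$. $T$ is the left shift: $T\{x_1,x_2,x_3,\dots\}=\{x_2,x_3,\dots\}$. A Banach limit functional is a bounded linear functional $L$ on $l^\infty(V)$ such that $\|L\|\le 1$ and $L(Tx)=L(x)$ for all $x\in l^\infty(V)$. For $x\in l^\infty(V)$, $p(x):=\lim_{n\to\infty}\left(\sup_{j\in\mathbb{N}}\frac1n\left\|\sum_{i=0}^{n-1}x_{i+j}\right\|_V\right)$ (this limit exists). *)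

(* Defs.v *)
From Stdlib Require Import Reals Lra.
Open Scope R_scope.

Record Cplx : Type := mkC { Re : R ; Im : R }.
Definition C0 : Cplx := mkC 0 0.
Definition C1 : Cplx := mkC 1 0.
Definition Cadd (z w : Cplx) : Cplx := mkC (Re z + Re w) (Im z + Im w).
Definition Copp (z : Cplx) : Cplx := mkC (- Re z) (- Im z).
Definition Cmul (z w : Cplx) : Cplx :=
  mkC (Re z * Re w - Im z * Im w) (Re z * Im w + Im z * Re w).
Definition Cmod (z : Cplx) : R := sqrt (Re z ^ 2 + Im z ^ 2).

Record CNormedSpace : Type := {
  carrier :> Type ;
  vzero : carrier ;
  vadd : carrier -> carrier -> carrier ;
  vopp : carrier -> carrier ;
  vscal : Cplx -> carrier -> carrier ;
  vnorm : carrier -> R ;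
  vadd_assoc : forall x y z, vadd x (vadd y z) = vadd (vadd x y) z ;
  vadd_comm : forall x y, vadd x y = vadd y x ;
  vadd_0 : forall x, vadd x vzero = x ;
  vadd_opp : forall x, vadd x (vopp x) = vzero ;
  vscal_1 : forall x, vscal C1 x = x ;
  vscal_assoc : forall a b x, vscal a (vscal b x) = vscal (Cmul a b) x ;
  vscal_distr_v : forall a x y, vscal a (vadd x y) = vadd (vscal a x) (vscal a y) ;
  vscal_distr_s : forall a b x, vscal (Cadd a b) x = vadd (vscal a x) (vscal b x) ;
  vnorm_nonneg : forall x, 0 <= vnorm x ;
  vnorm_eq0 : forall x, vnorm x = 0 -> x = vzero ;
  vnorm_scal : forall a x, vnorm (vscal a x) = Cmod a * vnorm x ;
  vnorm_triangle : forall x y, vnorm (vadd x y) <= vnorm x + vnorm y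
}.

Arguments vzero {c}.
Arguments vadd {c} _ _.
Arguments vopp {c} _.
Arguments vscal {c} _ _.
Arguments vnorm {c} _.

Section Seqs.
Variable V : CNormedSpace.

(** Sequences x_1, x_2, ... are represented as [x : nat -> V] with x_{k+1} = x k. *)
Definition seqV := nat -> V.

Definition in_linf (x : seqV) : Prop := exists M, forall n, vnorm (x n) <= M.

Definition is_supnorm (x : seqV) (s : R) : Prop :=
  is_lub (fun r => exists n, r = vnorm (x n)) s.

Definition seq_add (x y : seqV) : seqV := fun n => vadd (x n) (y n).
Definition seq_scal (a : Cplx) (x : seqV) : seqV := fun n => vscal a (x n).

Definition shift (x : seqV) : seqV := fun n => x (S n).

(** L is an element of l^infty(V)^* (a in_linf Cplx-linear functional on l^infty(V));
    L is given as a function on all sequences, only its values on l^infty(V) matter. *)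
Definition is_dual_elem (L : seqV -> Cplx) : Prop :=
  (forall x y, in_linf x -> in_linf y -> L (seq_add x y) = Cadd (L x) (L y)) /\
  (forall a x, in_linf x -> L (seq_scal a x) = Cmul a (L x)) /\
  (exists K, forall x s, in_linf x -> is_supnorm x s -> Cmod (L x) <= K * s).

Definition opnorm_le1 (L : seqV -> Cplx) : Prop :=
  forall x s, in_linf x -> is_supnorm x s -> Cmod (L x) <= s.

Definition banach_limit (L : seqV -> Cplx) : Prop :=
  is_dual_elem L /\ opnorm_le1 L /\
  (forall x, in_linf x -> L (shift x) = L x).

Fixpoint vsum (f : nat -> V) (n : nat) : V :=
  match n with
  | O => vzero
  | S k => vadd (vsum f k) (f k)
  end.

Definition is_avg_sup (x : seqV) (n : nat) (a : R) : Prop :=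
  is_lub (fun r => exists j, r = / INR n * vnorm (vsum (fun i => x (i + j)%nat) n)) a.

Definition is_p (x : seqV) (l : R) : Prop :=
  exists a : nat -> R,
    (forall n, (1 <= n)%nat -> is_avg_sup x n (a n)) /\ Un_cv a l.

End Seqs.

Arguments in_linf {V} _.
Arguments is_supnorm {V} _ _.
Arguments shift {V} _ _.
Arguments is_dual_elem {V} _.
Arguments opnorm_le1 {V} _.
Arguments banach_limit {V} _.
Arguments is_p {V} _ _.

(* Main.v *)
Require Import Defs.
From Stdlib Require Import Reals Lra Lia Psatz ClassicalEpsilon FunctionalExtensionality.
Open Scope R_scope.

Lemma Ceq (z w : Cplx) : Re z = Re w -> Im z = Im w -> z = w.
Proof. destruct z, w; simpl; intros; subst; reflexivity. Qed.

Lemma Cmod_nonneg z : 0 <= Cmod z.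
Proof. unfold Cmod; apply sqrt_pos. Qed.

Lemma Cmod_real r : 0 <= r -> Cmod (mkC r 0) = r.
Proof. intro H; unfold Cmod; cbn [Re Im]. replace (r ^ 2 + 0 ^ 2) with (r ^ 2) by ring.
  now apply sqrt_pow2. Qed.

Lemma Cmod_m1 : Cmod (mkC (-1) 0) = 1.
Proof. unfold Cmod; cbn [Re Im]. replace ((-1) ^ 2 + 0 ^ 2) with (1 ^ 2) by ring.
  apply sqrt_pow2; lra. Qed.

Lemma Cmod_eq0 z : Cmod z = 0 -> z = Defs.C0.
Proof. unfold Cmod; intro H. apply sqrt_eq_0 in H; [|nra].
  apply Ceq; simpl; nra. Qed.

Lemma vscal_C0 {V : CNormedSpace} (v : V) : vscal Defs.C0 v = vzero.
Proof. apply vnorm_eq0. rewrite vnorm_scal. unfold Defs.C0. rewrite Cmod_real by lra. ring. Qed.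

Lemma vnorm_zero {V : CNormedSpace} : vnorm (@vzero V) = 0.
Proof. rewrite <- (vscal_C0 vzero), vnorm_scal. unfold Defs.C0. rewrite Cmod_real by lra. ring. Qed.

Definition m1 := mkC (-1) 0.

Lemma vadd_m1 {V : CNormedSpace} (v : V) : vadd v (vscal m1 v) = vzero.
Proof. rewrite <- (vscal_1 V v) at 1. rewrite <- vscal_distr_s.
  replace (Cadd Defs.C1 m1) with Defs.C0. apply vscal_C0.
  apply Ceq; unfold Defs.C0, Defs.C1, m1; simpl; ring. Qed.

Lemma vadd_swap {V : CNormedSpace} (a b c e : V) :
  vadd (vadd a b) (vadd c e) = vadd (vadd a e) (vadd c b).
Proof.
  rewrite <- !vadd_assoc. f_equal. rewrite (vadd_comm V c e), (vadd_comm V b (vadd e c)).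
  rewrite <- vadd_assoc. reflexivity.
Qed.

Lemma vsum_ext {V : CNormedSpace} (f g : nat -> V) n :
  (forall i, f i = g i) -> vsum V f n = vsum V g n.
Proof. intro H; induction n; simpl; auto. rewrite IHn, H; auto. Qed.

Lemma vsum_split {V : CNormedSpace} (f : nat -> V) m n :
  vsum V f (m + n) = vadd (vsum V f m) (vsum V (fun i => f (m + i)%nat) n).
Proof. induction n; simpl.
  - rewrite Nat.add_0_r, vadd_0; auto.
  - rewrite Nat.add_succ_r; simpl. rewrite IHn, vadd_assoc; auto.
Qed.

Lemma vsum_bound {V : CNormedSpace} (f : nat -> V) M n :
  (forall i, vnorm (f i) <= M) -> vnorm (vsum V f n) <= INR n * M.
Proof. intro H; induction n; cbn [vsum].
  - rewrite vnorm_zero; simpl; lra.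
  - eapply Rle_trans; [apply vnorm_triangle|]. rewrite S_INR.
    specialize (H n). lra.
Qed.

Lemma in_linf_add {V : CNormedSpace} (x y : seqV V) :
  in_linf x -> in_linf y -> in_linf (seq_add V x y).
Proof. intros [M1 H1] [M2 H2]; exists (M1 + M2); intro n; unfold seq_add.
  eapply Rle_trans; [apply vnorm_triangle|]. specialize (H1 n); specialize (H2 n); lra. Qed.

Lemma in_linf_scal {V : CNormedSpace} a (x : seqV V) :
  in_linf x -> in_linf (seq_scal V a x).
Proof. intros [M H]; exists (Cmod a * M); intro n; unfold seq_scal.
  rewrite vnorm_scal. apply Rmult_le_compat_l; auto. apply Cmod_nonneg. Qed.

Lemma in_linf_shift {V : CNormedSpace} (x : seqV V) : in_linf x -> in_linf (shift x).
Proof. intros [M H]; exists M; intro n; apply H. Qed.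

Lemma in_linf_pos {V : CNormedSpace} (x : seqV V) :
  in_linf x -> exists M, 0 <= M /\ forall n, vnorm (x n) <= M.
Proof. intros [M H]; exists (Rmax M 0); split; [apply Rmax_r|].
  intro n; eapply Rle_trans; [apply H|apply Rmax_l]. Qed.
Lemma seq_zero_in {V : CNormedSpace} : in_linf (fun _ : nat => @vzero V).
Proof. exists 0; intro; rewrite vnorm_zero; lra. Qed.

Lemma L_zero {V : CNormedSpace} (L : seqV V -> Cplx) :
  is_dual_elem L -> L (fun _ => vzero) = Defs.C0.
Proof. intros [_ [Hs _]].
  assert (E : (fun _ : nat => @vzero V) = seq_scal V Defs.C0 (fun _ => vzero)).
  { apply functional_extensionality; intro; unfold seq_scal; now rewrite vscal_C0. }
  rewrite E, Hs by apply seq_zero_in. apply Ceq; unfold Defs.C0; simpl; ring. Qed.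

Lemma L_shiftk {V : CNormedSpace} (L : seqV V -> Cplx) (x : seqV V) k :
  in_linf x -> (forall y, in_linf y -> L (shift y) = L y) ->
  in_linf (fun j => x (k + j)%nat) /\ L (fun j => x (k + j)%nat) = L x.
Proof. intros Hx Hsh; induction k.
  - simpl. split; [exact Hx|]. f_equal.
  - destruct IHk as [H1 H2].
    assert (E : (fun j => x (S k + j)%nat) = shift (fun j => x (k + j)%nat)).
    { apply functional_extensionality; intro j; unfold shift; f_equal; lia. }
    rewrite E. split; [now apply in_linf_shift|]. rewrite Hsh; auto.
Qed.

Lemma L_sum {V : CNormedSpace} (L : seqV V -> Cplx) (x : seqV V) n :
  is_dual_elem L -> in_linf x -> (forall y, in_linf y -> L (shift y) = L y) ->
  in_linf (fun j => vsum V (fun i => x (i + j)%nat) n) /\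
  L (fun j => vsum V (fun i => x (i + j)%nat) n) = Cmul (mkC (INR n) 0) (L x).
Proof. intros HL Hx Hsh. induction n.
  - cbn [vsum]. split; [apply seq_zero_in|]. rewrite L_zero by auto.
    apply Ceq; unfold Defs.C0; simpl; ring.
  - destruct IHn as [H1 H2]. destruct (L_shiftk L x n Hx Hsh) as [H3 H4].
    assert (E : (fun j => vsum V (fun i => x (i + j)%nat) (S n)) =
      seq_add V (fun j => vsum V (fun i => x (i + j)%nat) n) (fun j => x (n + j)%nat)).
    { apply functional_extensionality; intro j; reflexivity. }
    rewrite E. split; [now apply in_linf_add|].
    destruct HL as [Ha _]. rewrite Ha by auto. rewrite H2, H4.
    apply Ceq; rewrite S_INR; simpl; ring.
Qed.

Lemma is_lub_ext (E F : R -> Prop) s : (forall r, E r <-> F r) -> is_lub E s -> is_lub F s.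
Proof. intros H [H1 H2]; split.
  - intros r Hr; apply H1, H, Hr.
  - intros b Hb; apply H2; intros r Hr; apply Hb, H, Hr. Qed.

Lemma lim_ge (a : nat -> R) l c : (forall n, (1 <= n)%nat -> c <= a n) -> Un_cv a l -> c <= l.
Proof. intros H Hc. destruct (Rle_or_lt c l) as [|Hlt]; auto.
  destruct (Hc (c - l)) as [N HN]; [lra|].
  specialize (HN (max N 1) (Nat.le_max_l _ _)). specialize (H (max N 1) (Nat.le_max_r _ _)).
  unfold R_dist in HN. apply Rabs_def2 in HN. lra. Qed.

Lemma dir1 {V : CNormedSpace} (L : seqV V -> Cplx) :
  banach_limit L -> forall x : seqV V, in_linf x -> forall l : R, is_p x l -> Cmod (L x) <= l.
Proof.
  intros [HL [Hn Hsh]] x Hx l [a [Ha Hcv]].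
  apply (lim_ge a l); auto. intros n Hn1.
  destruct (L_sum L x n HL Hx Hsh) as [Hin Hs].
  set (S := fun j => vsum V (fun i => x (i + j)%nat) n) in *.
  assert (Hnpos : 0 < INR n) by (apply lt_0_INR; lia).
  set (y := seq_scal V (mkC (/ INR n) 0) S).
  assert (Hy : in_linf y) by (apply in_linf_scal; auto).
  assert (HLy : L y = L x).
  { unfold y. destruct HL as [_ [Hsc _]]. rewrite Hsc, Hs by auto.
    apply Ceq; simpl; field; lra. }
  rewrite <- HLy. apply Hn; auto.
  eapply is_lub_ext; [|apply (Ha n Hn1)].
  intro r; split; intros [j Hj]; exists j; rewrite Hj; unfold y, seq_scal, S;
    rewrite vnorm_scal, Cmod_real; auto; left; apply Rinv_0_lt_compat; auto.
Qed.
Definition Sn {V : CNormedSpace} (x : seqV V) n j := vnorm (vsum V (fun i => x (i + j)%nat) n).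

Lemma avg_ex {V : CNormedSpace} (x : seqV V) : in_linf x ->
  forall n, exists a, (n = 0%nat -> a = 0) /\ ((1 <= n)%nat -> is_avg_sup V x n a).
Proof. intros Hx n. destruct (in_linf_pos x Hx) as [M [HM0 HM]].
  destruct n as [|n']. { exists 0; split; auto; intro; lia. }
  set (n := S n').
  assert (Hn : 0 < INR n) by (apply lt_0_INR; unfold n; lia).
  set (E := fun r => exists j, r = / INR n * vnorm (vsum V (fun i => x (i + j)%nat) n)).
  assert (HB : bound E).
  { exists (/ INR n * (INR n * M)). intros r [j Hj]; rewrite Hj.
    apply Rmult_le_compat_l; [left; apply Rinv_0_lt_compat; auto|].
    apply vsum_bound; auto. }
  destruct (completeness E HB) as [a Ha]. { exists (/ INR n * vnorm (vsum V (fun i => x (i + 0)%nat) n)), 0%nat; auto. }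
  exists a; split; [intro; discriminate|]. intros _; exact Ha.
Qed.

Lemma afun_ex {V : CNormedSpace} (x : seqV V) : in_linf x ->
  exists a : nat -> R, a 0%nat = 0 /\ forall n, (1 <= n)%nat -> is_avg_sup V x n (a n).
Proof. intro Hx.
  exists (fun n => proj1_sig (constructive_indefinite_description _ (avg_ex x Hx n))).
  split.
  - destruct (constructive_indefinite_description _ (avg_ex x Hx 0)) as [a Ha]; simpl; apply Ha; auto.
  - intros n Hn. destruct (constructive_indefinite_description _ (avg_ex x Hx n)) as [a Ha]; simpl; apply Ha; auto.
Qed.

Lemma avg_P1 {V : CNormedSpace} (x : seqV V) n a : (1 <= n)%nat -> is_avg_sup V x n a ->
  forall j, Sn x n j <= INR n * a.
Proof. intros Hn [H1 _] j. assert (Hp : 0 < INR n) by (apply lt_0_INR; lia).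
  assert (H := H1 _ (ex_intro _ j eq_refl)). unfold Sn.
  apply Rmult_le_compat_l with (r := INR n) in H; [|lra].
  rewrite <- Rmult_assoc, Rinv_r, Rmult_1_l in H; lra. Qed.

Lemma avg_P2 {V : CNormedSpace} (x : seqV V) n a c : (1 <= n)%nat -> is_avg_sup V x n a ->
  (forall j, Sn x n j <= c) -> INR n * a <= c.
Proof. intros Hn [_ H2] Hc. assert (Hp : 0 < INR n) by (apply lt_0_INR; lia).
  assert (H : a <= / INR n * c).
  { apply H2. intros r [j Hj]; rewrite Hj. apply Rmult_le_compat_l.
    left; apply Rinv_0_lt_compat; auto. apply Hc. }
  apply Rmult_le_compat_l with (r := INR n) in H; [|lra].
  rewrite <- Rmult_assoc, Rinv_r, Rmult_1_l in H; lra. Qed.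

Lemma avg_P0 {V : CNormedSpace} (x : seqV V) n a : (1 <= n)%nat -> is_avg_sup V x n a -> 0 <= a.
Proof. intros Hn H. assert (Hp : 0 < INR n) by (apply lt_0_INR; lia).
  assert (H1 := avg_P1 x n a Hn H 0%nat). assert (0 <= Sn x n 0) by apply vnorm_nonneg.
  nra. Qed.
Lemma telescope {V : CNormedSpace} (x : seqV V) n j :
  vsum V (fun i => seq_add V (shift x) (seq_scal V m1 x) (i + j)%nat) n =
  vadd (x (n + j)%nat) (vscal m1 (x j)).
Proof. induction n; cbn [vsum].
  - simpl. symmetry; apply vadd_m1.
  - rewrite IHn. unfold seq_add, seq_scal, shift.
    rewrite vadd_swap, vadd_m1, vadd_comm, vadd_0. reflexivity.
Qed.

Lemma dir2_shift {V : CNormedSpace} (L : seqV V -> Cplx) :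
  is_dual_elem L ->
  (forall x : seqV V, in_linf x -> forall l : R, is_p x l -> Cmod (L x) <= l) ->
  forall x, in_linf x -> L (shift x) = L x.
Proof.
  intros HL H x Hx.
  set (d := seq_add V (shift x) (seq_scal V m1 x)).
  assert (Hd : in_linf d) by (apply in_linf_add; [apply in_linf_shift|apply in_linf_scal]; auto).
  destruct (in_linf_pos x Hx) as [M [HM0 HM]].
  destruct (afun_ex d Hd) as [a [Ha0 Ha]].
  assert (Hb : forall n, (1 <= n)%nat -> 0 <= a n /\ INR n * a n <= 2 * M).
  { intros n Hn; split; [eapply avg_P0; eauto|].
    apply (avg_P2 d n); auto. intro j; unfold Sn. unfold d; rewrite telescope.
    eapply Rle_trans; [apply vnorm_triangle|]. rewrite vnorm_scal. unfold m1; rewrite Cmod_m1.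
    generalize (HM (n + j)%nat) (HM j); lra. }
  assert (Hp : is_p d 0).
  { exists a; split; auto. intros eps Heps.
    destruct (INR_unbounded (2 * M / eps)) as [N HN].
    exists (max N 1). intros n Hn.
    assert (Hn1 : (1 <= n)%nat) by lia.
    destruct (Hb n Hn1) as [H0 H1].
    assert (HNn : INR N <= INR n) by (apply le_INR; lia).
    assert (HNe : INR N * eps > 2 * M).
    { apply Rmult_gt_compat_r with (r := eps) in HN; auto.
      unfold Rdiv in HN; rewrite Rmult_assoc, Rinv_l, Rmult_1_r in HN; lra. }
    assert (Hpos : 0 < INR n) by (apply lt_0_INR; lia).
    assert (Hlt : INR n * a n < INR n * eps) by (assert (INR N * eps <= INR n * eps) by (apply Rmult_le_compat_r; lra); lra).
    apply Rmult_lt_reg_l in Hlt; auto.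
    unfold R_dist. rewrite Rminus_0_r, Rabs_right; lra. }
  specialize (H d Hd 0 Hp).
  assert (HL0 : L d = Defs.C0) by (apply Cmod_eq0; apply Rle_antisym; auto; apply Cmod_nonneg).
  destruct HL as [Hadd [Hsc _]].
  unfold d in HL0. rewrite Hadd, Hsc in HL0 by (try apply in_linf_shift; try apply in_linf_scal; auto).
  unfold Cadd, Cmul, m1, Defs.C0 in HL0. injection HL0; intros E1 E2.
  apply Ceq; simpl in *; lra.
Qed.
Lemma fekete {V : CNormedSpace} (x : seqV V) s a :
  (forall k, vnorm (x k) <= s) -> 0 <= s -> a 0%nat = 0 ->
  (forall n, (1 <= n)%nat -> is_avg_sup V x n (a n)) ->
  exists l, Un_cv a l /\ l <= a 1%nat /\ a 1%nat <= s.
Proof.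
  intros Hs Hs0 Ha0 Ha.
  assert (Hbd : forall n, (1 <= n)%nat -> 0 <= a n <= s).
  { intros n Hn; split; [eapply avg_P0; eauto|].
    assert (Hp : 0 < INR n) by (apply lt_0_INR; lia).
    assert (INR n * a n <= INR n * s).
    { apply (avg_P2 x n); auto. intro j; apply vsum_bound; auto. }
    nra. }
  assert (Hsub : forall m n, INR (m + n) * a (m + n)%nat <= INR m * a m + INR n * a n).
  { intros m n. destruct m as [|m']. { simpl. lra. }
    destruct n as [|n']. { rewrite Nat.add_0_r; simpl; lra. }
    apply (avg_P2 x); [lia|apply Ha; lia|]. intro j. unfold Sn.
    rewrite vsum_split. eapply Rle_trans; [apply vnorm_triangle|].
    apply Rplus_le_compat.
    - apply (avg_P1 x (S m') (a (S m'))); [lia|apply Ha; lia].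
    - rewrite (vsum_ext _ (fun i => x (i + (S m' + j))%nat)) by (intro; f_equal; lia).
      apply (avg_P1 x (S n') (a (S n'))); [lia|apply Ha; lia]. }
  assert (Hq : forall m q r, INR (q * m + r) * a (q * m + r)%nat <= INR q * (INR m * a m) + INR r * a r).
  { intros m q r; induction q.
    - simpl; lra.
    - replace (S q * m + r)%nat with (m + (q * m + r))%nat by lia.
      eapply Rle_trans; [apply Hsub|]. rewrite S_INR. lra. }
  assert (Hr : forall r, INR r * a r <= INR r * s).
  { intro r; destruct r as [|r']. { simpl; lra. }
    apply Rmult_le_compat_l; [apply pos_INR|]. apply Hbd; lia. }
  set (E := fun r => exists n, (1 <= n)%nat /\ r = - a n).
  destruct (completeness E) as [g [Hg1 Hg2]].
  { exists 0. intros r [n [Hn Hr']]; rewrite Hr'. specialize (Hbd n Hn); lra. }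
  { exists (- a 1%nat), 1%nat; auto. }
  set (l := - g).
  assert (Hlow : forall n, (1 <= n)%nat -> l <= a n).
  { intros n Hn. assert (- a n <= g) by (apply Hg1; exists n; auto). unfold l; lra. }
  assert (Hclose : forall eps, 0 < eps -> exists m, (1 <= m)%nat /\ a m < l + eps).
  { intros eps Heps. apply Classical_Prop.NNPP; intro Hno.
    assert (g <= g - eps).
    { apply Hg2. intros r [n [Hn Hr']]; rewrite Hr'.
      destruct (Rlt_or_le (a n) (l + eps)) as [Hlt|Hge].
      - exfalso; apply Hno; exists n; auto.
      - unfold l in Hge; lra. }
    lra. }
  exists l; split; [|split; [apply Hlow; auto|apply Hbd; auto]].
  intros eps Heps.
  destruct (Hclose (eps / 2)) as [m [Hm1 Hm]]; [lra|].
  assert (Hmp : 0 < INR m) by (apply lt_0_INR; lia).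
  destruct (INR_unbounded (2 * INR m * s / eps)) as [N HN].
  exists (max N 1). intros n Hn.
  assert (Hn1 : (1 <= n)%nat) by lia.
  assert (Hnp : 0 < INR n) by (apply lt_0_INR; lia).
  assert (HNn : INR N <= INR n) by (apply le_INR; lia).
  assert (HNe : INR N * eps > 2 * INR m * s).
  { apply Rmult_gt_compat_r with (r := eps) in HN; auto.
    unfold Rdiv in HN; rewrite Rmult_assoc, Rinv_l, Rmult_1_r in HN; lra. }
  assert (Hne : INR n * eps > 2 * INR m * s).
  { assert (INR N * eps <= INR n * eps) by (apply Rmult_le_compat_r; lra); lra. }
  set (q := (n / m)%nat). set (r := (n mod m)%nat).
  assert (Hdm : n = (q * m + r)%nat).
  { unfold q, r. rewrite Nat.mul_comm. apply Nat.div_mod; lia. }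
  assert (Hrm : (r < m)%nat) by (apply Nat.mod_upper_bound; lia).
  assert (Hrm' : INR r <= INR m) by (apply le_INR; lia).
  assert (HnE : INR n = INR q * INR m + INR r) by (rewrite Hdm, plus_INR, mult_INR; auto).
  assert (Hc := Hq m q r). rewrite <- Hdm in Hc.
  assert (Hr1 := Hr r).
  destruct (Hbd m Hm1) as [Ham0 Hams].
  assert (Hq0 : 0 <= INR q) by apply pos_INR.
  assert (Hr0 : 0 <= INR r) by apply pos_INR.
  assert (H1 : INR q * (INR m * a m) <= INR n * a m) by nra.
  assert (H2 : INR r * s <= INR m * s) by nra.
  assert (H3 : INR n * a n < INR n * (l + eps)) by nra.
  apply Rmult_lt_reg_l in H3; auto.
  specialize (Hlow n Hn1).
  unfold R_dist. apply Rabs_def1; lra.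
Qed.

Theorem mainTheorem8 (V : CNormedSpace) (L : seqV V -> Cplx) :
  is_dual_elem L ->
  (banach_limit L <->
   (forall x : seqV V, in_linf x -> forall l : R, is_p x l -> Cmod (L x) <= l)).
Proof.
  intro HL; split; [apply dir1|].
  intro H. split; [auto|split; [|apply dir2_shift; auto]].
  intros x s Hx [Hs1 Hs2].
  assert (Hs : forall k, vnorm (x k) <= s) by (intro k; apply Hs1; exists k; auto).
  assert (Hs0 : 0 <= s) by (eapply Rle_trans; [apply vnorm_nonneg|apply (Hs 0%nat)]).
  destruct (afun_ex x Hx) as [a [Ha0 Ha]].
  destruct (fekete x s a Hs Hs0 Ha0 Ha) as [l [Hl [Hl1 H1s]]].
  assert (Hp : is_p x l) by (exists a; auto).
  specialize (H x Hx l Hp). lra.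
Qed.
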